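(* Let $T:[0,1)\to[0,1)$ be an interval exchange transformation and let $f:[0,1)\to\mathbb{R}$ be a function of bounded variation. Let $\{T^i\Delta:0\le i<q\}$ be a Rokhlin tower of intervals (i.e. $\Delta$ is an interval and $T^i\Delta$, $0\le i<q$, are pairwise disjoint intervals). Then there exists $a\in\mathbb{R}$ such that \[|f^{(q)}(x)-a|\le \mathrm{Var}_{[0,1)}f\quad\text{and}\quad |f^{(2q)}(x)-2a|\le 2\,\mathrm{Var}_{[0,1)}f\] for all $x\in\bigcup_{i=0}^{q-1}T^i(\Delta\cap T^{-q}\Delta\cap T^{-2q}\Delta)$.
   Context: An interval exchange transformation is a bijection of $[0,1)$ which splits $[0,1)$ into finitely many intervals and rearranges them by translations. $f^{(n)}=\sum_{i=0}^{n-1}f\circ T^i$. $\mathrm{Var}_{[0,1)}f$ is the total variation of $f$. *)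

(* Defs.v *)
From Stdlib Require Import Reals.
From Coquelicot Require Import Coquelicot.
Open Scope R_scope.

Fixpoint sumR (n : nat) (g : nat -> R) : R :=
  match n with O => 0 | S m => sumR m g + g m end.

Fixpoint iterT (T : R -> R) (n : nat) (x : R) : R :=
  match n with O => x | S m => T (iterT T m x) end.

Definition in01 (x : R) : Prop := 0 <= x < 1.

Definition is_IET (T : R -> R) : Prop :=
  (exists (d : nat) (a c : nat -> R),
      (0 < d)%nat /\ a O = 0 /\ a d = 1 /\
      (forall k, (k < d)%nat -> a k < a (S k)) /\
      (forall k x, (k < d)%nat -> a k <= x < a (S k) -> T x = x + c k)) /\
  (forall x, in01 x -> in01 (T x)) /\
  (forall x y, in01 x -> in01 y -> T x = T y -> x = y) /\
  (forall y, in01 y -> exists x, in01 x /\ T x = y).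

Definition birkhoff (T f : R -> R) (n : nat) (x : R) : R :=
  sumR n (fun i => f (iterT T i x)).

Definition var_sums (f : R -> R) (v : R) : Prop :=
  exists (n : nat) (x : nat -> R),
    (forall i, (i <= n)%nat -> in01 (x i)) /\
    (forall i, (i < n)%nat -> x i < x (S i)) /\
    v = sumR n (fun i => Rabs (f (x (S i)) - f (x i))).

Definition BV01 (f : R -> R) : Prop :=
  exists M, forall v, var_sums f v -> v <= M.

Definition Var01 (f : R -> R) : R := real (Lub_Rbar (var_sums f)).

Definition is_interval (S : R -> Prop) : Prop :=
  forall x y z, S x -> S z -> x <= y <= z -> S y.

Definition imageT (T : R -> R) (i : nat) (S : R -> Prop) : R -> Prop :=
  fun y => exists x, S x /\ y = iterT T i x.

Definition rokhlin_tower (T : R -> R) (Delta : R -> Prop) (q : nat) : Prop :=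
  (forall x, Delta x -> in01 x) /\ is_interval Delta /\
  (forall i, (i < q)%nat -> is_interval (imageT T i Delta)) /\
  (forall i j y, (i < q)%nat -> (j < q)%nat -> i <> j ->
      imageT T i Delta y -> imageT T j Delta y -> False).

(* Main.v *)
Require Import Defs.
From Stdlib Require Import Reals.
From Coquelicot Require Import Coquelicot.
From Stdlib Require Import Lra Lia Classical.
Open Scope R_scope.

Lemma sumR_ext n g h : (forall k, (k < n)%nat -> g k = h k) -> sumR n g = sumR n h.
Proof.
  induction n; simpl; intros H; auto.
  rewrite IHn by (intros; apply H; lia). rewrite H by lia. reflexivity.
Qed.

Lemma sumR_add a b g : sumR (a + b) g = sumR a g + sumR b (fun j => g (a + j)%nat).
Proof.
  induction b; simpl.
  - rewrite Nat.add_0_r. ring.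
  - rewrite Nat.add_succ_r. simpl. rewrite IHb. ring.
Qed.

Lemma sumR_minus n g h : sumR n (fun k => g k - h k) = sumR n g - sumR n h.
Proof. induction n; simpl; [ring|rewrite IHn; ring]. Qed.

Lemma sumR_abs n g : Rabs (sumR n g) <= sumR n (fun k => Rabs (g k)).
Proof.
  induction n; simpl. rewrite Rabs_R0; lra.
  eapply Rle_trans. apply Rabs_triang. lra.
Qed.

Lemma iterT_add T m n x : iterT T (m + n) x = iterT T m (iterT T n x).
Proof. induction m; simpl; congruence. Qed.

Lemma iterT_in01 T n x : (forall x, in01 x -> in01 (T x)) -> in01 x -> in01 (iterT T n x).
Proof. intros H. induction n; simpl; auto. Qed.

Lemma var_le f v : BV01 f -> var_sums f v -> v <= Var01 f.
Proof.
  intros [M HM] Hv. unfold Var01.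
  destruct (Lub_Rbar_correct (var_sums f)) as [Hub Hl].
  assert (H1 := Hub v Hv).
  assert (H2 : Rbar_le (Lub_Rbar (var_sums f)) M) by (apply Hl; intros w Hw; apply HM; auto).
  destruct (Lub_Rbar (var_sums f)); simpl in *; tauto.
Qed.

Definition psum (f : R -> R) N (x : nat -> R) :=
  sumR N (fun i => Rabs (f (x (S i)) - f (x i))).

Lemma extend f N x p :
  (forall i, (i <= N)%nat -> in01 (x i)) -> (forall i, (i < N)%nat -> x i < x (S i)) ->
  in01 p -> x N <= p ->
  exists N' x', (forall j, (j <= N')%nat -> in01 (x' j)) /\
    (forall j, (j < N')%nat -> x' j < x' (S j)) /\ x' N' = p /\
    psum f N x + Rabs (f p - f (x N)) <= psum f N' x'.
Proof.
  intros H1 H2 Hp Hle. destruct (Rle_lt_or_eq_dec _ _ Hle) as [Hlt|Heq].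
  - exists (S N), (fun i => if Nat.leb i N then x i else p). split; [|split; [|split]].
    + intros i Hi. destruct (Nat.leb i N) eqn:E; auto. apply Nat.leb_le in E; auto.
    + intros i Hi. destruct (Nat.leb i N) eqn:E; [|apply Nat.leb_gt in E; lia].
      apply Nat.leb_le in E. destruct (Nat.leb (S i) N) eqn:E2.
      * apply Nat.leb_le in E2. apply H2. lia.
      * apply Nat.leb_gt in E2. assert (i = N) by lia. subst; auto.
    + destruct (Nat.leb (S N) N) eqn:E; auto. apply Nat.leb_le in E; lia.
    + unfold psum. cbn [sumR]. rewrite Nat.leb_refl.
      destruct (Nat.leb (S N) N) eqn:E; [apply Nat.leb_le in E; lia|].
      rewrite (sumR_ext N (fun i => Rabs (f (if Nat.leb (S i) N then x (S i) else p) -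
                     f (if Nat.leb i N then x i else p))) (fun i => Rabs (f (x (S i)) - f (x i)))).
      lra.
      intros k Hk. destruct (Nat.leb (S k) N) eqn:A; [|apply Nat.leb_gt in A; lia].
      destruct (Nat.leb k N) eqn:B; [|apply Nat.leb_gt in B; lia]. reflexivity.
  - exists N, x. split; [|split; [|split]]; auto. rewrite Heq, Rminus_diag, Rabs_R0. lra.
Qed.

Lemma max_idx n (u : nat -> R) : exists k0, (k0 <= n)%nat /\ forall k, (k <= n)%nat -> u k <= u k0.
Proof.
  induction n.
  - exists 0%nat. split; auto. intros k Hk. assert (k = 0%nat) by lia. subst; lra.
  - destruct IHn as [k0 [Hk0 H]]. destruct (Rle_dec (u k0) (u (S n))).
    + exists (S n). split; auto. intros k Hk. destruct (Nat.eq_dec k (S n)); [subst; lra|].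
      assert (u k <= u k0) by (apply H; lia). lra.
    + exists k0. split; [lia|]. intros k Hk. destruct (Nat.eq_dec k (S n)); [subst; lra|].
      apply H; lia.
Qed.

Definition skip (k0 k : nat) : nat := if Nat.ltb k k0 then k else S k.

Lemma sum_skip n k0 g : (k0 <= n)%nat ->
  sumR (S n) g = sumR n (fun k => g (skip k0 k)) + g k0.
Proof.
  revert k0. induction n; intros k0 Hk.
  - assert (k0 = 0%nat) by lia. subst. simpl. ring.
  - destruct (Nat.eq_dec k0 (S n)).
    + subst. change (sumR (S (S n)) g) with (sumR (S n) g + g (S n)).
      rewrite (sumR_ext (S n) (fun k => g (skip (S n) k)) g); auto.
      intros k Hk'. unfold skip. destruct (Nat.ltb k (S n)) eqn:E; auto.
      apply Nat.ltb_ge in E; lia.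
    + change (sumR (S (S n)) g) with (sumR (S n) g + g (S n)).
      rewrite (IHn k0) by lia. cbn [sumR].
      replace (skip k0 n) with (S n). ring.
      unfold skip. destruct (Nat.ltb n k0) eqn:E; [apply Nat.ltb_lt in E; lia|]. auto.
Qed.

Lemma fam f : forall n (u v : nat -> R),
  (forall k, (k < n)%nat -> 0 <= u k /\ u k <= v k /\ v k < 1) ->
  (forall j k, (j < n)%nat -> (k < n)%nat -> j <> k -> v j < u k \/ v k < u j) ->
  exists N x, (forall i, (i <= N)%nat -> in01 (x i)) /\
    (forall i, (i < N)%nat -> x i < x (S i)) /\
    (forall w, 0 <= w -> (forall k, (k < n)%nat -> v k <= w) -> x N <= w) /\
    sumR n (fun k => Rabs (f (v k) - f (u k))) <= psum f N x.
Proof.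
  induction n; intros u v Hr Hd.
  - exists 0%nat, (fun _ => 0). repeat split; try lra; try (intros; lia).
    intros w Hw _. auto. unfold psum; simpl; lra.
  - destruct (max_idx n u) as [k0 [Hk0 Hmax]].
    destruct (IHn (fun k => u (skip k0 k)) (fun k => v (skip k0 k))) as [N [x [P1 [P2 [P3 P4]]]]].
    + intros k Hk. apply Hr. unfold skip; destruct (Nat.ltb k k0); lia.
    + intros j k Hj Hk Hjk. apply Hd; unfold skip;
        destruct (Nat.ltb_spec j k0); destruct (Nat.ltb_spec k k0); lia.
    + assert (Hxn : x N <= u k0).
      { destruct (Hr k0) as [? ?]; [lia|]. apply P3; [lra|].
        intros k Hk. set (s := skip k0 k).
        assert (Hs : (s < S n)%nat /\ s <> k0) by (unfold s, skip; destruct (Nat.ltb_spec k k0); lia).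
        destruct Hs as [Hs1 Hs2].
        destruct (Hd s k0 Hs1 ltac:(lia) Hs2) as [?|?]. lra.
        assert (u s <= u k0) by (apply Hmax; lia).
        destruct (Hr k0) as [? [? ?]]; [lia|]. lra. }
      destruct (Hr k0) as [Hu0 [Huv Hv1]]; [lia|].
      destruct (extend f N x (u k0) P1 P2 ltac:(split; lra) Hxn) as [N1 [x1 [Q1 [Q2 [Q3 Q4]]]]].
      destruct (extend f N1 x1 (v k0) Q1 Q2 ltac:(split; lra) ltac:(lra)) as [N2 [x2 [R1 [R2 [R3 R4]]]]].
      exists N2, x2. split; [auto|split; [auto|split]].
      * intros w Hw Hvw. rewrite R3. apply Hvw. lia.
      * rewrite (sum_skip n k0) by lia. rewrite Q3 in R4. cbv beta in *.
        pose proof (Rabs_pos (f (u k0) - f (x N))). lra.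
Qed.

Lemma rotate i m G : sumR (i + m) (fun j => G (j + i)%nat) =
  sumR i (fun k => G (k + (i + m))%nat) + sumR m (fun j => G (i + j)%nat).
Proof.
  replace (sumR (i + m) (fun j => G (j + i)%nat)) with (sumR (m + i) (fun j => G (j + i)%nat))
    by (f_equal; lia).
  rewrite sumR_add. rewrite Rplus_comm. f_equal.
  - apply sumR_ext; intros; f_equal; lia.
  - apply sumR_ext; intros; f_equal; lia.
Qed.

Definition zrep (T : R -> R) q i y k :=
  if Nat.ltb k i then iterT T k (iterT T q y) else iterT T k y.

Lemma rep T f q i y : (i < q)%nat ->
  birkhoff T f q (iterT T i y) = sumR q (fun k => f (zrep T q i y k)).
Proof.
  intros Hi. assert (E : exists m, q = (i + m)%nat) by (exists (q - i)%nat; lia).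
  destruct E as [m ->]. unfold birkhoff.
  rewrite (sumR_ext _ _ (fun j => f (iterT T (j + i) y))) by (intros; rewrite iterT_add; auto).
  rewrite (rotate i m (fun n => f (iterT T n y))). rewrite sumR_add. f_equal.
  - apply sumR_ext. intros k Hk. unfold zrep. destruct (Nat.ltb k i) eqn:A;
      [|apply Nat.ltb_ge in A; lia]. rewrite iterT_add. auto.
  - apply sumR_ext. intros k Hk. unfold zrep. destruct (Nat.ltb (i + k) i) eqn:A;
      [apply Nat.ltb_lt in A; lia|]. rewrite iterT_add. auto.
Qed.

Lemma zrep_img T q i y (Delta : R -> Prop) k : Delta y -> Delta (iterT T q y) ->
  imageT T k Delta (zrep T q i y k).
Proof.
  intros H1 H2. unfold zrep. destruct (Nat.ltb k i).
  - exists (iterT T q y); split; auto.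
  - exists y; split; auto.
Qed.

Definition adm (T : R -> R) (Delta : R -> Prop) q x :=
  exists i y, (i < q)%nat /\ Delta y /\ Delta (iterT T q y) /\ x = iterT T i y.

Lemma close T f Delta q x1 x2 : is_IET T -> BV01 f -> rokhlin_tower T Delta q ->
  adm T Delta q x1 -> adm T Delta q x2 ->
  Rabs (birkhoff T f q x1 - birkhoff T f q x2) <= Var01 f.
Proof.
  intros HT Hf [Tw1 [Tw2 [Tw3 Tw4]]] [i1 [y1 [Hi1 [D1 [D1' ->]]]]] [i2 [y2 [Hi2 [D2 [D2' ->]]]]].
  destruct HT as [_ [Hin _]].
  rewrite (rep T f q i1 y1 Hi1), (rep T f q i2 y2 Hi2).
  set (z1 := zrep T q i1 y1). set (z2 := zrep T q i2 y2).
  set (u := fun k => Rmin (z1 k) (z2 k)). set (v := fun k => Rmax (z1 k) (z2 k)).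
  assert (Im : forall k, imageT T k Delta (z1 k) /\ imageT T k Delta (z2 k)).
  { intros k; split; apply zrep_img; auto. }
  assert (In : forall k w, imageT T k Delta w -> in01 w).
  { intros k w [y [Hy ->]]. apply iterT_in01; auto. }
  assert (Iu : forall k, imageT T k Delta (u k)).
  { intros k; unfold u, Rmin; destruct (Rle_dec _ _); apply Im. }
  assert (Iv : forall k, imageT T k Delta (v k)).
  { intros k; unfold v, Rmax; destruct (Rle_dec _ _); apply Im. }
  destruct (fam f q u v) as [N [x [P1 [P2 [P3 P4]]]]].
  - intros k Hk. destruct (In _ _ (proj1 (Im k))). destruct (In _ _ (proj2 (Im k))).
    unfold u, v, Rmin, Rmax; destruct (Rle_dec _ _); repeat split; lra.
  - intros j k Hj Hk Hjk.
    assert (uv : forall k, u k <= v k) by (intros; unfold u, v, Rmin, Rmax; destruct (Rle_dec _ _); lra).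
    destruct (Rlt_dec (v j) (u k)); [left; auto|].
    destruct (Rlt_dec (v k) (u j)); [right; auto|]. exfalso.
    destruct (Rle_dec (u j) (u k)).
    + apply (Tw4 j k (u k) Hj Hk Hjk); auto.
      apply (Tw3 j Hj (u j) (u k) (v j)); auto. split; lra.
    + apply (Tw4 j k (u j) Hj Hk Hjk); auto.
      apply (Tw3 k Hk (u k) (u j) (v k)); auto. split; lra.
  - rewrite <- sumR_minus. eapply Rle_trans. apply sumR_abs.
    rewrite (sumR_ext _ _ (fun k => Rabs (f (v k) - f (u k)))).
    + eapply Rle_trans. apply P4. apply var_le; auto. exists N, x. split; [auto|split; [auto|reflexivity]].
    + intros k _. unfold u, v, Rmin, Rmax. destruct (Rle_dec _ _); auto.
      apply Rabs_minus_sym.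
Qed.

Lemma birkhoff_add T f a b x :
  birkhoff T f (a + b) x = birkhoff T f a x + birkhoff T f b (iterT T a x).
Proof.
  unfold birkhoff. rewrite sumR_add. f_equal. apply sumR_ext. intros.
  rewrite Nat.add_comm, iterT_add. auto.
Qed.

Theorem lemma6p2 (T f : R -> R) (Delta : R -> Prop) (q : nat) :
  is_IET T -> BV01 f -> rokhlin_tower T Delta q ->
  exists a : R, forall x : R,
    (exists i y, (i < q)%nat /\ Delta y /\ Delta (iterT T q y) /\
                 Delta (iterT T (2 * q) y) /\ x = iterT T i y) ->
    Rabs (birkhoff T f q x - a) <= Var01 f /\
    Rabs (birkhoff T f (2 * q) x - 2 * a) <= 2 * Var01 f.
Proof.
  intros HT Hf Htw.
  destruct (classic (exists x0, adm T Delta q x0)) as [[x0 Hx0]|Hno].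
  - exists (birkhoff T f q x0). intros x [i [y [Hi [D0 [D1 [D2 ->]]]]]].
    assert (A1 : adm T Delta q (iterT T i y)) by (exists i, y; auto).
    assert (A2 : adm T Delta q (iterT T q (iterT T i y))).
    { exists i, (iterT T q y). repeat split; auto.
      - rewrite <- iterT_add. replace (q + q)%nat with (2 * q)%nat by lia. auto.
      - rewrite <- !iterT_add. f_equal. lia. }
    pose proof (close T f Delta q _ _ HT Hf Htw A1 Hx0) as C1.
    pose proof (close T f Delta q _ _ HT Hf Htw A2 Hx0) as C2.
    split; auto.
    replace (2 * q)%nat with (q + q)%nat by lia. rewrite birkhoff_add.
    replace (birkhoff T f q (iterT T i y) + birkhoff T f q (iterT T q (iterT T i y)) - 2 * birkhoff T f q x0)
      with ((birkhoff T f q (iterT T i y) - birkhoff T f q x0) + (birkhoff T f q (iterT T q (iterT T i y)) - birkhoff T f q x0)) by ring.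
    eapply Rle_trans. apply Rabs_triang. lra.
  - exists 0. intros x [i [y [Hi [D0 [D1 [D2 ->]]]]]]. exfalso. apply Hno.
    exists (iterT T i y), i, y. auto.
Qed.
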